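(* For each integer $k\ge 2$, the graph $\Theta(2,2,2k)$ is chromatic-choosable, but it is not weakly enumeratively chromatic-choosable.
   Context: $\Theta(l_1,l_2,l_3)$ denotes the graph consisting of two end vertices joined by three internally disjoint paths of lengths $l_1,l_2,l_3$. A graph $G$ is chromatic-choosable if its list chromatic number $\chi_\ell(G)$ equals its chromatic number $\chi(G)$. For a list assignment $L$, $P(G,L)$ is the number of proper $L$-colorings; an $m$-assignment assigns lists of size $m$ to every vertex; $P(G,m)$ is the chromatic polynomial and $P_\ell(G,m)$, the list color function, is the minimum of $P(G,L)$ over all $m$-assignments $L$. A graph $G$ is weakly enumeratively chromatic-choosable if $P_\ell(G,\chi(G))=P(G,\chi(G))$. *)

(* Defs.v *)
From mathcomp Require Import all_boot.
Set Implicit Arguments. Unset Strict Implicit. Unset Printing Implicit Defensive.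

Definition is_min (P : nat -> Prop) (n : nat) : Prop :=
  P n /\ forall m, P m -> n <= m.

Section Coloring.
Variables (V : finType) (adj : rel V).

Definition proper (C : Type) (f : V -> C) : Prop :=
  forall x y, adj x y -> f x <> f y.

Definition properb (m : nat) (f : {ffun V -> 'I_m}) : bool :=
  [forall x, forall y, adj x y ==> (f x != f y)].

Definition chrom_poly (m : nat) : nat := #|[set f : {ffun V -> 'I_m} | properb f]|.

Definition colorable (m : nat) : bool := 0 < chrom_poly m.

(* chromatic number chi(G): least m such that G is m-colorable (G is always |V|-colorable) *)
Definition chi : nat :=
  \big[minn/#|V|]_(m < #|V|.+1 | colorable m) (m : nat).

Definition m_assignment (m : nat) (L : V -> seq nat) : Prop :=
  forall x, uniq (L x) /\ size (L x) = m.

Definition choosable (m : nat) : Prop :=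
  forall L, m_assignment m L ->
    exists f : V -> nat, proper f /\ forall x, f x \in L x.

Definition list_chromatic_number_is (n : nat) : Prop := is_min choosable n.

(* P(G,L): number of proper L-colorings. Colors used are < bound L. *)
Definition bound (L : V -> seq nat) : nat := \max_(x : V) \max_(c <- L x) c.+1.
Definition P_list (L : V -> seq nat) : nat :=
  #|[set f : {ffun V -> 'I_(bound L)} | properb f &&
       [forall x, (val (f x)) \in L x]]|.

Definition list_color_function_is (m p : nat) : Prop :=
  is_min (fun q => exists L, m_assignment m L /\ P_list L = q) p.

Definition chromatic_choosable : Prop := list_chromatic_number_is chi.

Definition weakly_enum_chromatic_choosable : Prop :=
  list_color_function_is chi (chrom_poly chi).

End Coloring.

(* Theta(l1,l2,l3): vertices 0 and 1 are the end vertices; path j is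
   0 :: (lj - 1 fresh internal vertices) ++ [:: 1]. Vertex set {0,..,l1+l2+l3-2}. *)
Definition theta_paths (l1 l2 l3 : nat) : seq (seq nat) :=
  [:: 0 :: rcons (iota 2 l1.-1) 1;
      0 :: rcons (iota l1.+1 l2.-1) 1;
      0 :: rcons (iota (l1 + l2) l3.-1) 1].

Definition theta_edge_nat (l1 l2 l3 : nat) (a b : nat) : bool :=
  has (fun p => ((a, b) \in zip p (behead p)) || ((b, a) \in zip p (behead p)))
      (theta_paths l1 l2 l3).

Definition theta_V (l1 l2 l3 : nat) : finType := 'I_(l1 + l2 + l3 - 1).

Definition theta_adj (l1 l2 l3 : nat) : rel (theta_V l1 l2 l3) :=
  fun x y => theta_edge_nat l1 l2 l3 (val x) (val y).
Arguments theta_adj : clear implicits.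

(* Main.v *)
Require Import Defs.
From mathcomp Require Import all_boot zify.
Set Implicit Arguments. Unset Strict Implicit. Unset Printing Implicit Defensive.

Definition oth (l : seq nat) (x : nat) := head x [seq y <- l | y != x].

Lemma two_elts (l : seq nat) : uniq l -> size l = 2 -> exists p q, l = [:: p; q] /\ p != q.
Proof. case: l => [|p [|q [|]]] //= /andP[H _] _; exists p, q; split => //; by move: H; rewrite inE. Qed.

Lemma oth_mem l x : x \in l -> oth l x \in l.
Proof.
rewrite /oth; case E: [seq y <- l | y != x] => [|z s] //= _.
have: z \in [seq y <- l | y != x] by rewrite E inE eqxx.
by rewrite mem_filter => /andP[].
Qed.

Lemma oth_pq (p q : nat) : p != q -> oth [:: p; q] p = q /\ oth [:: p; q] q = p.
Proof. by move=> pq; rewrite /oth /= eqxx eq_sym pq. Qed.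

Lemma oth_spec l x : uniq l -> size l = 2 -> x \in l -> oth l x != x /\ forall y, y \in l -> y != x -> oth l x = y.
Proof.
move=> U S; have [p [q [-> pq]]] := two_elts U S.
have [E1 E2] := oth_pq pq.
have qp : q != p by rewrite eq_sym.
rewrite !inE; case/orP => /eqP ->; [rewrite E1 | rewrite E2]; split => //;
  by move=> y; rewrite !inE => /orP[] /eqP -> //; rewrite eqxx.
Qed.

Section Path.
Variable lp : nat -> seq nat.
Hypothesis Hlp : forall i, uniq (lp i) /\ size (lp i) = 2.

Fixpoint F (c : nat) (i : nat) : option nat :=
  match i with
  | 0 => Some c
  | i'.+1 => if F c i' is Some x then
               (if x \in lp i'.+1 then Some (oth (lp i'.+1) x) else None)
             else None
  end.

Lemma F_mem c i x : F c i.+1 = Some x -> x \in lp i.+1.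
Proof.
rewrite /=; case: (F c i) => [y|] //; case: ifP => // H [<-]; exact: oth_mem.
Qed.

Lemma F_alt s t i x y : s != t -> F s i = Some x -> F t i = Some y ->
  (x == (if odd i then t else s)) && (y == (if odd i then s else t)).
Proof.
move=> st; elim: i x y => [|i IH] x y /=; first by move=> [<-] [<-]; rewrite !eqxx.
case Es: (F s i) => [x0|] //; case Et: (F t i) => [y0|] //.
have /andP[/eqP ex /eqP ey] := IH _ _ Es Et.
case: ifP => // hx [<-]; case: ifP => // hy [<-].
have [U S] := Hlp i.+1.
have xy : x0 != y0 by rewrite ex ey; case: (odd i) => //; rewrite eq_sym.
have [_ H1] := oth_spec U S hx; have [_ H2] := oth_spec U S hy.
rewrite (H1 y0) // ?(H2 x0) // 1?eq_sym // ex ey.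
by case: (odd i) => /=; rewrite !eqxx.
Qed.

Lemma path_ext c0 j : forall d, (if j is 0 then d = c0 else d \in lp j /\ (F c0 j = None \/ F c0 j = Some d)) ->
  exists col : nat -> nat, [/\ col 0 = c0, col j = d &
    forall i, 0 < i <= j -> col i \in lp i /\ col i.-1 != col i].
Proof.
elim: j => [|j IH] d /=.
  by move=> ->; exists (fun _ => c0); split => // -[|i].
case Ej: (F c0 j) => [x|] [dl Hd].
- have dx : d != x.
    move: Hd; case: ifP => hx.
      have [U S] := Hlp j.+1; have [H1 _] := oth_spec U S hx.
      by case => // -[<-].
    by move=> _; apply/eqP => dx; rewrite -dx dl in hx.
  have [col [c0E cjE Hc]] : exists col : nat -> nat, [/\ col 0 = c0, col j = x &
    forall i, 0 < i <= j -> col i \in lp i /\ col i.-1 != col i].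
    apply: IH; move: Ej; case: (j) => [|j1] Ej1; first by case: Ej1.
    by split; [exact: F_mem Ej1 | right].
  exists (fun i => if i == j.+1 then d else col i); split; [by rewrite /= c0E | by rewrite eqxx | ].
  move=> i /andP[i0 ij]; case: (eqVneq i j.+1) => [->|ne].
    by rewrite /= (ltn_eqF (ltnSn j)) cjE; split => //; rewrite eq_sym.
  have ij' : i <= j by lia.
  have := Hc i; rewrite i0 ij' => /(_ isT) [H1 H2]; split => //.
  by rewrite ifN //; lia.
- have [U S] := Hlp j.
  have [p [q [Ep pq]]] := two_elts U S.
  pose x := if p != d then p else q.
  have xd : x != d by rewrite /x; case: ifP => // /negbFE /eqP <-; rewrite eq_sym.
  have [col [c0E cjE Hc]] : exists col : nat -> nat, [/\ col 0 = c0, col j = x &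
    forall i, 0 < i <= j -> col i \in lp i /\ col i.-1 != col i].
    apply: IH; move: Ej Ep; case: (j) => [|j1] Ej1 Ep1; first by [].
    by split; [rewrite Ep1 /x; case: ifP; rewrite !inE eqxx ?orbT | left].
  exists (fun i => if i == j.+1 then d else col i); split; [by rewrite /= c0E | by rewrite eqxx | ].
  move=> i /andP[i0 ij]; case: (eqVneq i j.+1) => [->|ne].
    by rewrite /= (ltn_eqF (ltnSn j)) cjE; split.
  have ij' : i <= j by lia.
  have := Hc i; rewrite i0 ij' => /(_ isT) [H1 H2]; split => //.
  by rewrite ifN //; lia.
Qed.

Lemma path_final c0 cv N : 1 < N -> F c0 N.-1 != Some cv ->
  exists col : nat -> nat, [/\ col 0 = c0, col N = cv,
    (forall i, 0 < i < N -> col i \in lp i) &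
    (forall i, 0 < i <= N -> col i.-1 != col i)].
Proof.
move=> N1 HF.
have [d [Hd dcv]] : exists d, (if N.-1 is 0 then d = c0 else d \in lp N.-1 /\ (F c0 N.-1 = None \/ F c0 N.-1 = Some d)) /\ d != cv.
  have NE : N.-1 = (N.-2).+1 by lia.
  rewrite NE in HF *.
  case E: (F c0 N.-2.+1) => [x|].
    exists x; split; last by by apply: contraNneq HF => <-; rewrite E.
    by split; [exact: F_mem E | right].
  have [U S] := Hlp N.-2.+1; have [p [q [Ep pq]]] := two_elts U S.
  exists (if p != cv then p else q); split.
    by split; [rewrite Ep; case: ifP; rewrite !inE eqxx ?orbT | left].
  by case: ifP => // /negbFE /eqP <-; rewrite eq_sym.
have [col [c0E cjE Hc]] := path_ext Hd.
exists (fun i => if i == N then cv else col i); split.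
- by rewrite ifN ?c0E //; lia.
- by rewrite eqxx.
- move=> i /andP[i0 iN]; rewrite ifN; last by lia.
  by have [] := Hc i ltac:(lia).
- move=> i /andP[i0 iN]; case: (eqVneq i N) => [->|ne].
    by rewrite ifN ?cjE //; lia.
  rewrite ifN; last by lia.
  by have [] := Hc i ltac:(lia).
Qed.
End Path.

Definition gA (a1 a2 cu cv : nat) := ~~ (((cu==a1)&&(cv==a2)) || ((cu==a2)&&(cv==a1))).

Lemma gA_ex a1 a2 cu cv : a1 != a2 -> gA a1 a2 cu cv ->
  exists ca, [/\ ca \in [:: a1; a2], ca != cu & ca != cv].
Proof.
rewrite /gA => a12 H.
have [h|h] := boolP ((a1 != cu) && (a1 != cv)).
  by exists a1; rewrite !inE eqxx; case/andP: h.
exists a2; rewrite !inE eqxx orbT; split => //; lia.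
Qed.

Lemma SomeE (x y : nat) : (Some x == Some y) = (x == y). Proof. by []. Qed.
Lemma NoneE (y : nat) : (None == Some y) = false. Proof. by []. Qed.

Lemma choice s t w1 w2 a1 a2 b1 b2 (G : nat -> option nat) :
  s != t -> w1 != w2 -> a1 != a2 -> b1 != b2 ->
  (forall x y, G s = Some x -> G t = Some y -> x = t /\ y = s) ->
  exists cu cv, [/\ cu \in [:: s; t], cv \in [:: w1; w2], gA a1 a2 cu cv, gA b1 b2 cu cv & G cu != Some cv].
Proof.
move=> st w12 a12 b12 HG.
have D : [|| [&& gA a1 a2 s w1, gA b1 b2 s w1 & G s != Some w1],
             [&& gA a1 a2 s w2, gA b1 b2 s w2 & G s != Some w2],
             [&& gA a1 a2 t w1, gA b1 b2 t w1 & G t != Some w1] |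
             [&& gA a1 a2 t w2, gA b1 b2 t w2 & G t != Some w2]].
  case Es: (G s) => [x|]; case Et: (G t) => [y|].
  - have [-> ->] := HG _ _ Es Et; rewrite /gA ?SomeE ?NoneE /=; lia.
  - rewrite /gA ?SomeE ?NoneE /=; lia.
  - rewrite /gA ?SomeE ?NoneE /=; lia.
  - rewrite /gA ?SomeE ?NoneE /=; lia.
case/or4P: D => /and3P[H1 H2 H3].
- by exists s, w1; split => //; rewrite !inE eqxx ?orbT.
- by exists s, w2; split => //; rewrite !inE eqxx ?orbT.
- by exists t, w1; split => //; rewrite !inE eqxx ?orbT.
- by exists t, w2; split => //; rewrite !inE eqxx ?orbT.
Qed.

Lemma zip_path y n m x a b :
  ((a, b) \in zip (x :: rcons (iota m n) y) (rcons (iota m n) y)) =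
  if n is 0 then (a == x) && (b == y) else
  [|| (a == x) && (b == m), [&& m <= a, a.+1 < m + n & b == a.+1] | (a == (m + n).-1) && (b == y)].
Proof.
elim: n x m => [|n IH] x m /=; first by rewrite inE xpair_eqE.
rewrite in_cons xpair_eqE IH; case: n {IH} => [|n].
  have -> : [&& m <= a, a.+1 < m + 1 & b == a.+1] = false.
    by rewrite addn1 ltnS; case: (leqP m a).
  by rewrite addn1.
rewrite !addSnnS; case: (ltngtP m a) => [h|h|<-] //=.
by rewrite addnS ltnS addnS ltnS leq_addr.
Qed.

Definition Eb k a b := [|| (a == 0) && (b == 2) || (a == 2) && (b == 1), (a == 0) && (b == 3) || (a == 3) && (b == 1) |
   [|| (a == 0) && (b == 4), [&& 4 <= a, a.+1 < 2 * k + 3 & b == a.+1] | (a == 2 * k + 2) && (b == 1)]].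

Lemma bAC (p q r s t u : bool) : [|| p || q, r || s, t || u | false] = [|| p, r | t] || [|| q, s | u].
Proof. by case: p; case: q; case: r; case: s; case: t; case: u. Qed.

Lemma arE k : 0 < k -> (2*k).-1 = (2*k-2).+1 /\ 2 + 2 + (2*k-2).+1 = 2 * k + 3 /\ (2 * k + 3).-1 = 2 * k + 2.
Proof. lia. Qed.

Lemma adjE k a b : 0 < k -> theta_edge_nat 2 2 (2*k) a b = Eb k a b || Eb k b a.
Proof.
move=> k0; have [r1 [r2 r3]] := arE k0.
rewrite /theta_edge_nat /theta_paths /= !zip_path r1 r2 r3 !inE !xpair_eqE bAC.
reflexivity.
Qed.

Lemma ar0 k : 2 <= k -> (2*k).-1 = (k.-1).*2.+1 /\ 1 < 2 * k.
Proof. rewrite -muln2; lia. Qed.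
Lemma ar1 i : 3 < i -> [/\ (i == 0) = false, (i == 1) = false, (i == 2) = false & (i == 3) = false].
Proof. by move=> *; split; lia. Qed.
Lemma ar2 a k : 4 <= a -> a.+1 < 2*k+3 -> [/\ 0 < a.+1 - 3 <= 2*k, (a.+1 - 3).-1 = a - 3, 3 < a & 3 < a.+1].
Proof. by move=> *; split; lia. Qed.
Lemma ar3 k : 2 <= k -> [/\ 0 < 2*k <= 2*k, (2*k).-1 = 2*k+2-3 & 3 < 2*k+2].
Proof. by move=> *; split; lia. Qed.
Lemma ar4 i k : i < 2 + 2 + 2 * k - 1 -> (i == 0) = false -> (i == 1) = false -> (i == 2) = false -> (i == 3) = false ->
  0 < i - 3 < 2 * k /\ i - 3 + 3 = i.
Proof. by move=> *; split; lia. Qed.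

Lemma choosable2 k : 2 <= k -> choosable (theta_adj 2 2 (2*k)) 2.
Proof.
move=> hk L HL.
have [ar0a ar0b] := ar0 hk.
have k0 : 0 < k by apply: leq_trans hk.
pose Ln (i : nat) := if (insub i : option (theta_V 2 2 (2*k))) is Some x then L x else [:: 0; 1].
have HLn : forall i, uniq (Ln i) /\ size (Ln i) = 2.
  move=> i; rewrite /Ln; case: (insub i) => [x|] //; exact: HL.
have LnE : forall x, Ln (val x) = L x by move=> x; rewrite /Ln valK.
pose lp i := Ln (i + 3).
have Hlp : forall i, uniq (lp i) /\ size (lp i) = 2 by move=> i; exact: HLn.
have [U0 S0] := HLn 0; have [s [t [E0 st]]] := two_elts U0 S0.
have [U1 S1] := HLn 1; have [w1 [w2 [E1 w12]]] := two_elts U1 S1.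
have [U2 S2] := HLn 2; have [a1 [a2 [E2 a12]]] := two_elts U2 S2.
have [U3 S3] := HLn 3; have [b1 [b2 [E3 b12]]] := two_elts U3 S3.
have HG : forall x y, F lp s (2*k).-1 = Some x -> F lp t (2*k).-1 = Some y -> x = t /\ y = s.
  move=> x y Hx Hy; have := F_alt Hlp st Hx Hy.
  by rewrite ar0a /= odd_double /= => /andP[/eqP -> /eqP ->].
have [cu [cv [cuU cvW gAa gAb Gc]]] := choice (G := fun c => F lp c (2*k).-1) st w12 a12 b12 HG.
have [ca [caA cau cav]] := gA_ex a12 gAa.
have [cb [cbB cbu cbv]] := gA_ex b12 gAb.
have [col [c0E cNE Hin Hne]] := path_final Hlp ar0b Gc.
pose g i := if i == 0 then cu else if i == 1 then cv else if i == 2 then ca else if i == 3 then cb else col (i - 3).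
have g_big : forall i, 3 < i -> g i = col (i - 3).
  by move=> i hi; rewrite /g; case: (ar1 hi) => -> -> -> ->.
have H : forall a b, Eb k a b -> g a != g b.
  move=> a b; rewrite /Eb; case/or3P => [/orP[]|/orP[]|/or3P[]].
  - by case/andP => /eqP-> /eqP->; rewrite /= eq_sym.
  - by case/andP => /eqP-> /eqP->.
  - by case/andP => /eqP-> /eqP->; rewrite /= eq_sym.
  - by case/andP => /eqP-> /eqP->.
  - case/andP => /eqP-> /eqP->.
    by rewrite [g 4]g_big // /g /= -c0E (_ : 4 - 3 = 1) //; exact: (Hne 1 (ltnW ar0b)).
  - case/and3P => a4 ab /eqP->.
    have [r1 r2 r3 r4] := ar2 a4 ab.
    rewrite !g_big //.
    by have := Hne (a.+1 - 3) r1; rewrite r2.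
  - case/andP => /eqP-> /eqP->.
    have [r1 r2 r3] := ar3 hk.
    rewrite g_big //.
    by rewrite /g /= -cNE; have := Hne (2*k) r1; rewrite r2.
exists (fun x => g (val x)); split.
  move=> x y; rewrite /theta_adj adjE //.
  by case/orP => /H; [|rewrite eq_sym] => /eqP.
move=> x; rewrite -LnE; have := ltn_ord x.
case: x => i /= _ hi.
rewrite /g; case: ifP => [/eqP->|i0]; first by rewrite E0.
case: ifP => [/eqP->|i1]; first by rewrite E1.
case: ifP => [/eqP->|i2]; first by rewrite E2.
case: ifP => [/eqP->|i3]; first by rewrite E3.
have [r1 r2] := ar4 hi i0 i1 i2 i3.
by have := Hin (i - 3) r1; rewrite /lp r2.
Qed.


Section K.
Variable k : nat.
Hypothesis hk : 2 <= k.
Notation V := (theta_V 2 2 (2*k)).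
Notation adj := (theta_adj 2 2 (2*k)).

Lemma adjP (x y : V) : adj x y = Eb k (val x) (val y) || Eb k (val y) (val x).
Proof. by rewrite /theta_adj adjE //; lia. Qed.

Definition vtx (a : nat) (h : a < 2 + 2 + 2 * k - 1) : V := Ordinal h.

Lemma h0 : 0 < 2 + 2 + 2 * k - 1. Proof. lia. Qed.
Lemma h2 : 2 < 2 + 2 + 2 * k - 1. Proof. lia. Qed.

Lemma adj02 : adj (vtx h0) (vtx h2).
Proof. by rewrite adjP. Qed.

Lemma chrom0 : chrom_poly adj 0 = 0.
Proof.
apply/eqP; rewrite cards_eq0; apply/eqP/setP => f; rewrite !inE.
by have := ltn_ord (f (vtx h0)).
Qed.

Lemma chrom1 : chrom_poly adj 1 = 0.
Proof.
apply/eqP; rewrite cards_eq0; apply/eqP/setP => f; rewrite !inE.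
apply/negbTE/negP => /forallP/(_ (vtx h0))/forallP/(_ (vtx h2))/implyP/(_ adj02).
by rewrite (ord1 (f (vtx h0))) (ord1 (f (vtx h2))) eqxx.
Qed.

Definition pc (i : nat) : nat := if i <= 1 then 0 else if i <= 3 then 1 else odd i.+1.

Lemma pc_lt i : pc i < 2.
Proof. by rewrite /pc; case: ifP => //; case: ifP => //; case: (odd _). Qed.

Lemma pc_edge a b : Eb k a b -> pc a != pc b.
Proof.
have pc_big : forall i, 3 < i -> pc i = odd i.+1.
  by move=> i hi; rewrite /pc ifN; [rewrite ifN //|]; lia.
rewrite /Eb; case/or3P => [/orP[]|/orP[]|/or3P[]].
- by case/andP => /eqP-> /eqP->.
- by case/andP => /eqP-> /eqP->.
- by case/andP => /eqP-> /eqP->.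
- by case/andP => /eqP-> /eqP->.
- by case/andP => /eqP-> /eqP->.
- case/and3P => a4 ab /eqP->.
  rewrite !pc_big //; last lia.
  by rewrite /=; case: (odd a).
- case/andP => /eqP-> /eqP->.
  rewrite pc_big; last lia.
  have -> : (2*k+2).+1 = (k.+1).*2.+1 by rewrite -muln2; lia.
  by rewrite /= odd_double.
Qed.

Definition pf (b : bool) : {ffun V -> 'I_2} :=
  [ffun x => inord (if b then pc (val x) else 1 - pc (val x))].

Lemma pf_val b x : val (pf b x) = (if b then pc (val x) else 1 - pc (val x)).
Proof. rewrite ffunE /= inordK //; have := pc_lt x; have := pc_lt (val x); case: b; lia. Qed.

Lemma pf_proper b : properb adj (pf b).
Proof.
apply/forallP => x; apply/forallP => y; apply/implyP; rewrite adjP.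
have H : forall a c, Eb k a c -> (if b then pc a else 1 - pc a) != (if b then pc c else 1 - pc c).
  move=> a c /pc_edge; have := pc_lt a; have := pc_lt c; case: b; lia.
rewrite -val_eqE !pf_val.
by case/orP => /H //; rewrite eq_sym.
Qed.

Lemma chrom2 : 1 < chrom_poly adj 2.
Proof.
apply/card_gt1P; exists (pf true), (pf false); rewrite !inE !pf_proper; split => //.
apply/eqP => /ffunP/(_ (vtx h0)) /(congr1 val); rewrite !pf_val /=.
by [].
Qed.

Lemma bigmin_le (T : eqType) (r : seq T) (P : pred T) (F : T -> nat) x0 i c :
  i \in r -> P i -> F i <= c -> \big[minn/x0]_(j <- r | P j) F j <= c.
Proof.
elim: r => //= j r IH; rewrite inE big_cons; case/orP => [/eqP<-|ir] Pi Fi.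
  by rewrite Pi geq_min Fi.
by case: (P j); rewrite ?geq_min IH ?orbT.
Qed.

Lemma bigmin_leF (T : finType) (P : pred T) (F : T -> nat) x0 i c :
  P i -> F i <= c -> \big[minn/x0]_(j | P j) F j <= c.
Proof. by apply: bigmin_le; exact: mem_index_enum. Qed.

Lemma chiE : chi adj = 2.
Proof.
have cV : #|V| = 2 + 2 + 2 * k - 1 by rewrite card_ord.
apply/eqP; rewrite eqn_leq; apply/andP; split.
  have i2 : 2 < #|V|.+1 by rewrite cV; lia.
  rewrite /chi; apply: (@bigmin_leF _ _ _ _ (inord 2)).
    by rewrite /colorable inordK //; exact: ltnW chrom2.
  by rewrite inordK.
rewrite /chi; apply: (big_ind (fun x => 1 < x)).
- by rewrite cV; lia.
- by move=> x y hx hy; rewrite leq_min hx hy.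
- move=> i; rewrite /colorable; case: i => [[|[|i]]] //= _.
  by rewrite chrom0.
  by rewrite chrom1.
Qed.

Lemma choose_lb m : choosable adj m -> 2 <= m.
Proof.
case: m => [|[|m]] // Hc.
  have [f [_ Hf]] := Hc (fun _ => [::]) (fun x => conj isT erefl).
  by have := Hf (vtx h0).
have [f [Hp Hf]] := Hc (fun _ => [:: 0]) (fun _ => conj isT erefl).
have := Hf (vtx h0); have := Hf (vtx h2); rewrite !inE => /eqP e2 /eqP e0.
by have := Hp _ _ adj02; rewrite e0 e2.
Qed.

Definition lst (i : nat) : seq nat :=
  if i == 0 then [:: 0; 1] else if i == 1 then [:: 0; 2] else if i == 2 then [:: 0; 1]
  else if i == 3 then [:: 1; 2] else if i == 4 then [:: 0; 1]
  else if i == 2 * k + 2 then [:: 0; 2] else [:: 1; 2].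

Definition L0 (x : V) := lst (val x).

Lemma L0_assign : m_assignment 2 L0.
Proof. by move=> x; rewrite /L0 /lst; repeat case: ifP => _. Qed.

Definition tgt (a : nat) : nat :=
  if a == 0 then 0 else if a == 1 then 2 else if a == 2 then 1 else if a == 3 then 1
  else if a == 2 * k + 2 then 0 else if odd (a - 3) then 1 else 2.

Lemma core4 (x0 x1 x2 x3 : nat) : x0 \in [:: 0; 1] -> x1 \in [:: 0; 2] -> x2 \in [:: 0; 1] -> x3 \in [:: 1; 2] ->
  x0 != x2 -> x2 != x1 -> x0 != x3 -> x3 != x1 -> x0 = 0 /\ x2 = 1.
Proof. rewrite !inE; lia. Qed.

Lemma step2 (y : nat) i : y \in [:: 1; 2] -> y != (if odd i then 1 else 2) -> y = (if odd i.+1 then 1 else 2).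
Proof. rewrite /= !inE; case: (odd i) => /=; lia. Qed.

Lemma lst_mid a : 4 < a -> a < 2 * k + 2 -> lst a = [:: 1; 2].
Proof.
move=> h1 h2; rewrite /lst.
have [-> -> -> ->] := ar1 (ltnW h1).
have -> : (a == 4) = false by lia.
by have -> : (a == 2 * k + 2) = false by lia.
Qed.

Lemma lst4 : lst 4 = [:: 0; 1].
Proof. by []. Qed.

Lemma lst_end : lst (2 * k + 2) = [:: 0; 2].
Proof.
have h : 3 < 2 * k + 2 by lia.
rewrite /lst; have [-> -> -> ->] := ar1 h.
have -> : (2 * k + 2 == 4) = false by lia.
by rewrite eqxx.
Qed.

Lemma Eb_mid a : 4 <= a -> a.+1 < 2 * k + 3 -> Eb k a a.+1.
Proof. by move=> h1 h2; rewrite /Eb; apply/or3P; apply: Or33; apply/or3P; apply: Or32; rewrite h1 h2 eqxx. Qed.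

Lemma Eb_end : Eb k (2 * k + 2) 1.
Proof. by rewrite /Eb; apply/or3P; apply: Or33; apply/or3P; apply: Or33; rewrite !eqxx. Qed.

Lemma uniq_col (f : {ffun V -> 'I_(bound L0)}) :
  properb adj f -> [forall x, val (f x) \in L0 x] -> forall x, val (f x) = tgt (val x).
Proof.
move=> Hp Hm.
pose h a := if (insub a : option V) is Some x then val (f x) else 0.
have hE : forall a (ha : a < 2 + 2 + 2 * k - 1), h a = val (f (vtx ha)).
  move=> a ha; rewrite /h; case: insubP => [y _ ya|]; last by rewrite ha.
  by congr (val (f _)); apply: val_inj; rewrite ya.
have hmem : forall a, a < 2 + 2 + 2 * k - 1 -> h a \in lst a.
  by move=> a ha; rewrite hE; move/forallP: Hm => /(_ (vtx ha)).
have hedge : forall a b, a < 2 + 2 + 2 * k - 1 -> b < 2 + 2 + 2 * k - 1 -> Eb k a b -> h a != h b.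
  move=> a b ha hb e; rewrite !hE.
  move/forallP: Hp => /(_ (vtx ha))/forallP/(_ (vtx hb))/implyP; apply.
  by rewrite adjP /= e.
have n0 : 0 < 2 + 2 + 2 * k - 1 by lia.
have n1 : 1 < 2 + 2 + 2 * k - 1 by lia.
have n2 : 2 < 2 + 2 + 2 * k - 1 by lia.
have n3 : 3 < 2 + 2 + 2 * k - 1 by lia.
have n4 : 4 < 2 + 2 + 2 * k - 1 by lia.
have [e0 e2] := core4 (hmem 0 n0) (hmem 1 n1) (hmem 2 n2) (hmem 3 n3)
  (hedge 0 2 n0 n2 isT) (hedge 2 1 n2 n1 isT) (hedge 0 3 n0 n3 isT) (hedge 3 1 n3 n1 isT).
have Hpath : forall i, 0 < i <= 2 * k - 2 -> h (i + 3) = (if odd i then 1 else 2).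
  elim => [//|i IH] /andP[_ hi].
  case: i IH hi => [|i] IH hi.
    have := hmem 4 n4; have := hedge 0 4 n0 n4 isT; rewrite e0 /= => ne.
    rewrite lst4 !inE (_ : 1 + 3 = 4) //; move: ne; rewrite eq_sym; lia.
  have hi1 : 0 < i.+1 <= 2 * k - 2 by lia.
  have := IH hi1 => ev.
  have ha : i.+1 + 3 < 2 + 2 + 2 * k - 1 by lia.
  have hb : i.+2 + 3 < 2 + 2 + 2 * k - 1 by lia.
  apply: step2; first by rewrite -(@lst_mid (i.+2 + 3)); [exact: hmem | lia | lia].
  rewrite -ev eq_sym; apply: hedge => //.
  have -> : i.+2 + 3 = (i.+1 + 3).+1 by lia.
  by apply: Eb_mid; lia.
have nE : 2 * k + 2 < 2 + 2 + 2 * k - 1 by lia.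
have hlast : h (2 * k + 1) = 2.
  have := Hpath (2 * k - 2) ltac:(lia).
  have -> : 2 * k - 2 + 3 = 2 * k + 1 by lia.
  have -> : odd (2 * k - 2) = false.
    have -> : 2 * k - 2 = (k.-1).*2 by rewrite -muln2; lia.
    by rewrite odd_double.
  by [].
have eE : h (2 * k + 2) = 0.
  have m := hmem _ nE; rewrite lst_end !inE in m.
  have eb : Eb k (2 * k + 1) (2 * k + 2).
    by rewrite (_ : 2 * k + 2 = (2 * k + 1).+1); [apply: Eb_mid; lia | lia].
  have ne := hedge (2 * k + 1) (2 * k + 2) ltac:(lia) nE eb.
  rewrite hlast in ne; move: m ne; clear; lia.
have e1 : h 1 = 2.
  have := hmem 1 n1; have := hedge _ _ nE n1 Eb_end; rewrite eE /lst /= !inE; lia.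
have e3 : h 3 = 1.
  have := hmem 3 n3; have := hedge 3 1 n3 n1 isT; rewrite e1 /lst /= !inE; lia.
move=> [a ha]; rewrite -[Ordinal ha]/(vtx ha) -hE [val (vtx ha)]/=.
rewrite /tgt; case: ifP => [/eqP->|a0] //.
case: ifP => [/eqP->|a1] //.
case: ifP => [/eqP->|a2] //.
case: ifP => [/eqP->|a3] //.
case: ifP => [/eqP->|aE] //.
have := Hpath (a - 3) ltac:(lia).
by have -> : a - 3 + 3 = a by lia.
Qed.

Lemma Ple1 : P_list adj L0 <= 1.
Proof.
apply/card_le1_eqP => f1 f2; rewrite !inE => /andP[p1 m1] /andP[p2 m2].
by apply/ffunP => x; apply: val_inj; rewrite (uniq_col p1 m1) (uniq_col p2 m2).
Qed.

Lemma main13 : chromatic_choosable adj /\ ~ weakly_enum_chromatic_choosable adj.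
Proof.
split.
  rewrite /chromatic_choosable /list_chromatic_number_is chiE; split.
    exact: choosable2.
  exact: choose_lb.
rewrite /weakly_enum_chromatic_choosable /list_color_function_is chiE => -[_ Hmin].
have := Hmin (P_list adj L0) (ex_intro _ L0 (conj L0_assign erefl)).
have := chrom2; have := Ple1; lia.
Qed.

End K.

Unset Implicit Arguments.

Theorem lemma13 (k : nat) (hk : 2 <= k) :
  chromatic_choosable (theta_adj 2 2 (2 * k)) /\
  ~ weakly_enum_chromatic_choosable (theta_adj 2 2 (2 * k)).
Proof. exact: main13. Qed.
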